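(* For every positive integer $n$, \[ \sum_{k=1}^{n}(8k-1)\frac{(1)_k(-\tfrac{1}{4})_k(-\tfrac{3}{4})_k}{(\tfrac{1}{2})_k^2(\tfrac{3}{2})_k}\frac{(\tfrac{1}{2}+n)_k(-n)_k}{(\tfrac{1}{2}+3n)_k(-1-3n)_k}\sum_{i=1}^{k}\left\{\frac{1}{(2i-1)^2}-\frac{9}{4i^2}\right\} =\frac{n!^2(\tfrac{1}{6})_n(\tfrac{5}{6})_n}{(\tfrac{1}{2})_n^2(\tfrac{2}{3})_n(\tfrac{4}{3})_n}\sum_{j=1}^{2n}\frac{(-1)^{j}}{j^2}. \]
   Context: For a complex number $x$ and a nonnegative integer $n$, $(x)_n=x(x+1)\cdots(x+n-1)$ denotes the shifted factorial (Pochhammer symbol), with $(x)_0=1$. *)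

(* Defs.v *)
From mathcomp Require Import all_boot all_order all_algebra.
Set Implicit Arguments. Unset Strict Implicit. Unset Printing Implicit Defensive.
Import Order.TTheory GRing.Theory Num.Theory.
Local Open Scope ring_scope.

Definition poch (x : rat) (n : nat) : rat := \prod_(i < n) (x + i%:R).

(* Main.v *)
Require Import Defs.
From mathcomp Require Import all_boot all_order all_algebra.
From mathcomp Require Import ring lra zify.
Import Order.TTheory GRing.Theory Num.Theory.
Local Open Scope ring_scope.

Definition Tt (n k : nat) : rat :=
  (8 * k%:R - 1) *
     (poch 1 k * poch (-(1/4)) k * poch (-(3/4)) k
        / (poch (1/2) k ^+ 2 * poch (3/2) k)) *
     (poch (1/2 + n%:R) k * poch (- n%:R) k
        / (poch (1/2 + 3 * n%:R) k * poch (-1 - 3 * n%:R) k)).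

Lemma nS (n : nat) : n.+1%:R = n%:R + 1 :> rat.
Proof. by rewrite natr1. Qed.

Lemma pochS x k : poch x k.+1 = poch x k * (x + k%:R).
Proof. by rewrite /poch big_ord_recr. Qed.

Lemma poch0 x : poch x 0 = 1.
Proof. by rewrite /poch big_ord0. Qed.

Lemma sh1 x y k : y = x + 1 -> poch x k * (x + k%:R) = x * poch y k.
Proof.
move=> ->; elim: k => [|k IH]; first by rewrite !poch0 addr0 mulr1 mul1r.
rewrite !pochS mulrA -IH (nS k); ring.
Qed.

Lemma sh3 x y k : y = x + 3 ->
  poch x k * ((x + k%:R) * (x + 1 + k%:R) * (x + 2 + k%:R)) = x * (x+1) * (x+2) * poch y k.
Proof.
move=> ->.
have h1 := sh1 x (x+1) k erefl.
have h2 := sh1 (x+1) (x+2) k (ltac:(ring)).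
have h3 := sh1 (x+2) (x+3) k (ltac:(ring)).
have -> : poch x k * ((x + k%:R) * (x + 1 + k%:R) * (x + 2 + k%:R)) =
  (poch x k * (x + k%:R)) * (x + 1 + k%:R) * (x + 2 + k%:R) by ring.
rewrite h1.
have -> : x * poch (x + 1) k * (x + 1 + k%:R) * (x + 2 + k%:R) =
  x * (poch (x + 1) k * (x + 1 + k%:R)) * (x + 2 + k%:R) by ring.
rewrite h2.
have -> : x * ((x + 1) * poch (x + 2) k) * (x + 2 + k%:R) =
  x * (x + 1) * (poch (x + 2) k * (x + 2 + k%:R)) by ring.
by rewrite h3; ring.
Qed.

Lemma poch_neq0 x k : (forall i, (i < k)%N -> x + i%:R != 0) -> poch x k != 0.
Proof. by move=> H; rewrite /poch; apply/prodf_neq0 => i _; apply: H. Qed.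

Lemma poch_gt0 x k : 0 < x -> 0 < poch x k.
Proof.
move=> hx; rewrite /poch; apply: prodr_gt0 => i _.
have : (0 : rat) <= i%:R by rewrite ler0n.
lra.
Qed.

Lemma poch_zero m k : (m < k)%N -> poch (- m%:R) k = 0.
Proof.
move=> H; rewrite /poch (bigD1 (Ordinal H)) //= addNr mul0r //.
Qed.

Lemma solve_l {p c d : rat} : c != 0 -> p * c = d -> p = d / c.
Proof. by move=> c0 <-; rewrite mulfK. Qed.

Lemma pochN3 (n k : nat) : (k <= 3 * n + 1)%N -> poch (-1 - 3 * n%:R) k != 0.
Proof.
move=> H; apply: poch_neq0 => i hi.
have : (i%:R : rat) <= 3 * n%:R by rewrite -(natrM _ 3 n) ler_nat; lia.
lra.
Qed.

Definition aF (x y : rat) : rat :=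
  (x+1/2)/(x+1/2+y) * ((y-x-1)/(-x-1)) *
  ((3*x+1/2+y)*(3*x+3/2+y)*(3*x+5/2+y)/((3*x+1/2)*(3*x+3/2)*(3*x+5/2))) *
  ((-3*x-4)*(-3*x-3)*(-3*x-2)/((y-3*x-4)*(y-3*x-3)*(y-3*x-2))).

Definition bF (m y : rat) : rat :=
  (8*y+7)/(8*y-1)*(1+y)*(y-1/4)*(y-3/4)/((1/2+y)^+2*(3/2+y))*(1/2+ m +y)*(y-m)/((1/2+3 * m+y)*(y-1-3* m)).

Ltac nz1 := match goal with
 | |- is_true (?a * ?b != 0) => apply: mulf_neq0; nz1
 | |- is_true (?a ^+ _ != 0) => apply: expf_neq0; nz1
 | H : is_true (?p != 0) |- is_true (?p != 0) => exact H
 | H : is_true (0 < ?p) |- is_true (?p != 0) => exact: (lt0r_neq0 H)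
 | _ => lra end.
Ltac nz := repeat (apply/andP; split); nz1.

Lemma solve_r {p c d : rat} : c != 0 -> c * p = d -> p = d / c.
Proof. by move=> c0 <-; rewrite [c * p]mulrC mulfK. Qed.

Lemma Ta n k : (k <= n.+1)%N -> Tt n k = Tt n.+1 k * aF n%:R k%:R.
Proof.
move=> hk.
have hx : (0 : rat) <= n%:R by rewrite ler0n.
have hy : (k%:R : rat) <= n%:R + 1 by rewrite natr1 ler_nat.
have hy0 : (0 : rat) <= k%:R by rewrite ler0n.
have n1 := pochN3 n k ltac:(lia).
have n2 := pochN3 n.+1 k ltac:(lia).
have p1 : 0 < poch (1/2) k by apply: poch_gt0; lra.
have p2 : 0 < poch (3/2) k by apply: poch_gt0; lra.
have p3 : 0 < poch (1/2 + 3 * n%:R) k by apply: poch_gt0; lra.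
have p4 : 0 < poch (1/2 + 3 * n.+1%:R) k by apply: poch_gt0; rewrite ?(nS n); lra.
rewrite /Tt.
have e1 := sh1 (1/2 + n%:R) (1/2 + n.+1%:R) k ltac:(rewrite ?(nS n); ring).
have e2 := sh1 (- n.+1%:R) (- n%:R) k ltac:(rewrite ?(nS n); ring).
have e3 := sh3 (1/2 + 3 * n%:R) (1/2 + 3 * n.+1%:R) k ltac:(rewrite ?(nS n); ring).
have e4 := sh3 (-1 - 3 * n.+1%:R) (-1 - 3 * n%:R) k ltac:(rewrite ?(nS n); ring).
rewrite (solve_l _ e1); last by rewrite ?(nS n); lra.
rewrite (solve_r _ (esym e2)); last by rewrite ?(nS n); lra.
rewrite (solve_l _ e3); last by rewrite ?(nS n); nz.
rewrite (solve_r _ (esym e4)); last by rewrite ?(nS n); nz.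
rewrite /aF ?(nS n).
rewrite ?(nS n) in n2 p4.
clear e1 e2 e3 e4. field. nz.
Qed.

Lemma e8 (k : nat) : 8 * k%:R - 1 != 0 :> rat.
Proof. case: k => [|k]; first by rewrite mulr0. have : (0:rat) <= k%:R by rewrite ler0n. rewrite (nS k); lra. Qed.

Lemma Tb m k : (k <= 3 * m)%N -> Tt m k.+1 = Tt m k * bF m%:R k%:R.
Proof.
move=> hk.
have hx : (0 : rat) <= m%:R by rewrite ler0n.
have hy : (k%:R : rat) <= 3 * m%:R by rewrite -(natrM _ 3 m) ler_nat.
have hy0 : (0 : rat) <= k%:R by rewrite ler0n.
have n1 := pochN3 m k ltac:(lia).
have p1 : 0 < poch (1/2) k by apply: poch_gt0; lra.
have p2 : 0 < poch (3/2) k by apply: poch_gt0; lra.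
have p3 : 0 < poch (1/2 + 3 * m%:R) k by apply: poch_gt0; lra.
have h8 := e8 k.
rewrite /Tt /bF !pochS (nS k).
field. nz.
Qed.

Definition rhoF (x : rat) : rat :=
  (x+1)^+2*(x+1/6)*(x+5/6)/((x+1/2)^+2*(x+2/3)*(x+4/3)).
Definition Rf (x y : rat) : rat :=
  -4*(4*x+3)/(2*x+1)^+2 * (y*(4*y^+2-1)*(2*y+6*x+5)*(y-1/2)) /
  ((8*y-1)*(2*y+2*x+1)*(y-3*x-3)*(y-3*x-4)).
Definition Gk (n k : nat) : rat := Rf n%:R k%:R * Tt n.+1 k.

Lemma Z1 n k : (k <= n.+1)%N ->
  Tt n.+1 k - rhoF n%:R * Tt n k = Gk n k.+1 - Gk n k.
Proof.
move=> hk.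
have hx : (0 : rat) <= n%:R by rewrite ler0n.
have hy : (k%:R : rat) <= n%:R + 1 by rewrite natr1 ler_nat.
have hy0 : (0 : rat) <= k%:R by rewrite ler0n.
rewrite /Gk (@Ta n k hk) (@Tb n.+1 k ltac:(lia)).
move: (Tt n.+1 k) => T.
have h8 := e8 k.
rewrite /rhoF /Rf /aF /bF (nS n) (nS k).
field. nz.
Qed.

Definition hh (i : nat) : rat := 1 / ((2 * i%:R - 1) ^+ 2) - 9 / (4 * i%:R ^+ 2).
Definition sigF (x : rat) : rat :=
  rhoF (x+1) * ((4*x+7)*(2*x+1)^+2*(2*x+2)^+2/((4*x+3)*(2*x+3)^+2*(2*x+4)^+2)).
Definition Pp (x y : rat) : rat :=
  (((10 * 1000 + 395)) * x ^+ 0 + ((26 * 1000 + 856)) * x ^+ 1 + ((25 * 1000 + 812)) * x ^+ 2 + ((10 * 1000 + 944)) * x ^+ 3 + ((1 * 1000 + 728)) * x ^+ 4) * y ^+ 0 +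
  ((- (61 * 1000 + 635)) * x ^+ 0 + (- (161 * 1000 + 808)) * x ^+ 1 + (- (158 * 1000 + 100)) * x ^+ 2 + (- (68 * 1000 + 160)) * x ^+ 3 + (- (10 * 1000 + 944)) * x ^+ 4) * y ^+ 1 +
  (((84 * 1000 + 700)) * x ^+ 0 + ((234 * 1000 + 600)) * x ^+ 1 + ((241 * 1000 + 472)) * x ^+ 2 + ((109 * 1000 + 440)) * x ^+ 3 + ((18 * 1000 + 432)) * x ^+ 4) * y ^+ 2 +
  (((153 * 1000 + 20)) * x ^+ 0 + ((371 * 1000 + 136)) * x ^+ 1 + ((331 * 1000 + 456)) * x ^+ 2 + ((129 * 1000 + 24)) * x ^+ 3 + ((18 * 1000 + 432)) * x ^+ 4) * y ^+ 3 +
  ((- (505 * 1000 + 120)) * x ^+ 0 + (- ((1 * 1000 + 337) * 1000 + 856)) * x ^+ 1 + (- ((1 * 1000 + 317) * 1000 + 248)) * x ^+ 2 + (- (571 * 1000 + 392)) * x ^+ 3 + (- (92 * 1000 + 160)) * x ^+ 4) * y ^+ 4 +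
  (((390 * 1000 + 320)) * x ^+ 0 + (((1 * 1000 + 140) * 1000 + 96)) * x ^+ 1 + (((1 * 1000 + 229) * 1000 + 632)) * x ^+ 2 + ((580 * 1000 + 608)) * x ^+ 3 + ((101 * 1000 + 376)) * x ^+ 4) * y ^+ 5 +
  (((2 * 1000 + 240)) * x ^+ 0 + (- (117 * 1000 + 888)) * x ^+ 1 + (- (245 * 1000 + 504)) * x ^+ 2 + (- (165 * 1000 + 888)) * x ^+ 3 + (- (36 * 1000 + 864)) * x ^+ 4) * y ^+ 6 +
  ((- (64 * 1000 + 960)) * x ^+ 0 + (- (142 * 1000 + 848)) * x ^+ 1 + (- (103 * 1000 + 424)) * x ^+ 2 + (- (24 * 1000 + 576)) * x ^+ 3) * y ^+ 7 +
  ((- (8 * 1000 + 960)) * x ^+ 0 + (- (12 * 1000 + 288)) * x ^+ 1 + (- (4 * 1000 + 96)) * x ^+ 2) * y ^+ 8.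
Definition Qf (x y : rat) : rat :=
  Pp x y / (2*x+3)^+4 /
  (y*(8*y-1)*(2*y+2*x+1)*(2*y+2*x+3)*(y-3*x-4)*(y-3*x-5)*(y-3*x-6)*(y-3*x-7)).
Definition Wk (n k : nat) : rat := Qf n%:R k%:R * Tt n.+2 k.
Definition Ak (n k : nat) : rat := Gk n k * hh k.

Lemma Z2main n k : (0 < k)%N -> (k <= n.+2)%N ->
  Ak n.+1 k - sigF n%:R * Ak n k = Wk n k.+1 - Wk n k.
Proof.
move=> hk0 hk.
have hx : (0 : rat) <= n%:R by rewrite ler0n.
have hy : (k%:R : rat) <= n%:R + 2 by rewrite -(natrD _ n 2) ler_nat addn2.
have hy0 : (1 : rat) <= k%:R by rewrite ler1n.
rewrite /Ak /Wk /Gk (@Ta n.+1 k hk) (@Tb n.+2 k ltac:(lia)).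
move: (Tt n.+2 k) => T.
have h8 := e8 k.
rewrite /hh /sigF /rhoF /Rf /aF /bF /Qf /Pp (nS n.+1) (nS n) (nS k).
field. nz.
Qed.

Lemma Tt_zero m k : (m < k)%N -> Tt m k = 0.
Proof. by move=> H; rewrite /Tt (@poch_zero m k H) mulr0 mul0r mulr0. Qed.

Lemma Gk0 n : Gk n 0 = 0.
Proof. rewrite /Gk /Rf; ring. Qed.

Lemma Qf0 x : Qf x 0 = 0.
Proof. rewrite /Qf; move: (Pp x 0) => p. by rewrite !mul0r invr0 mulr0. Qed.

Lemma Wk0 n : Wk n 0 = 0.
Proof. by rewrite /Wk Qf0 mul0r. Qed.

Lemma Wk1 n : Wk n 1 = 0.
Proof.
rewrite /Wk /Qf.
have -> : Pp n%:R 1%:R = 0 by rewrite /Pp; ring.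
move: (Tt n.+2 1) => T.
by rewrite !mul0r.
Qed.

Lemma Z2 n k : (k <= n.+2)%N ->
  Ak n.+1 k - sigF n%:R * Ak n k = Wk n k.+1 - Wk n k.
Proof.
case: k => [|k] hk; last by apply: Z2main.
by rewrite /Ak !Gk0 Wk0 Wk1 !mul0r mulr0 subrr.
Qed.

Definition HH (k : nat) : rat := \sum_(1 <= i < k.+1) hh i.
Definition Lsum (n : nat) : rat := \sum_(0 <= k < n.+1) Tt n k * HH k.
Definition Ysum (n : nat) : rat := \sum_(0 <= k < n.+2) Ak n k.
Definition Cc (n : nat) : rat := (n`!)%:R ^+ 2 * poch (1/6) n * poch (5/6) n
       / (poch (1/2) n ^+ 2 * poch (2/3) n * poch (4/3) n).
Definition eF (x : rat) : rat := 1/(2*x+1)^+2 - 1/(2*x+2)^+2.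
Definition Alt (N : nat) : rat := \sum_(1 <= j < N.+1) ((-1) ^+ j / (j%:R ^+ 2)).

Lemma HH0 : HH 0 = 0.
Proof. by rewrite /HH big_geq. Qed.

Lemma HHS k : HH k.+1 = HH k + hh k.+1.
Proof. by rewrite /HH big_nat_recr. Qed.

Lemma lev1 n : Lsum n.+1 = rhoF n%:R * Lsum n - Ysum n.
Proof.
have E1 : Lsum n = \sum_(0 <= k < n.+2) Tt n k * HH k.
  by rewrite /Lsum [in RHS]big_nat_recr //= Tt_zero // mul0r addr0.
have S : \sum_(0 <= k < n.+2) (Tt n.+1 k * HH k - rhoF n%:R * (Tt n k * HH k)) = - Ysum n.
rewrite (eq_big_nat _ _ (F2 := fun k => (Gk n k.+1 * HH k - Gk n k * HH k.-1) - Ak n k)); last first.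
  move=> k /andP [_ hk].
  have := @Z1 n k ltac:(lia).
  case: k hk => [|k] hk Z.
    rewrite /= HH0 /Ak Gk0; clear Z.
    move: (Tt n.+1 0) (Tt n 0) (Gk n 1) (hh 0) (rhoF n%:R) => a b c d r; ring.
  move: Z; rewrite /= HHS /Ak.
  move: (Tt n.+1 k.+1) (Tt n k.+1) (Gk n k.+2) (Gk n k.+1) (HH k) (hh k.+1) (rhoF n%:R) => a b c d e f r Z.
  have -> : a*(e+f) - r*(b*(e+f)) = (a - r*b)*(e+f) by ring.
  rewrite Z; ring.
rewrite sumrB (telescope_sumr (fun k => Gk n k * HH k.-1)) //.
rewrite Gk0 /Gk Tt_zero // /Ysum.
rewrite mulr0 !mul0r subrr sub0r //.
rewrite E1 /Lsum mulr_sumr; move: S; rewrite sumrB /Ysum.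
move: (\sum_(0 <= k < n.+2) Tt n.+1 k * HH k) (\sum_(0 <= i < n.+2) rhoF n%:R * (Tt n i * HH i)) (\sum_(0 <= k < n.+2) Ak n k) => A B C S.
lra.
Qed.

Lemma Crec m : Cc m.+1 = rhoF m%:R * Cc m.
Proof.
have hx : (0 : rat) <= m%:R by rewrite ler0n.
have p1 : 0 < poch (1/2) m by apply: poch_gt0; lra.
have p2 : 0 < poch (2/3) m by apply: poch_gt0; lra.
have p3 : 0 < poch (4/3) m by apply: poch_gt0; lra.
rewrite /Cc /rhoF factS natrM !pochS (nS m).
field. nz.
Qed.

Lemma lev2 n : Ysum n = Cc n.+1 * eF n%:R.
Proof.
elim: n => [|n IH].
  rewrite /Ysum !big_nat_recr //= big_geq // /Ak Gk0 /Gk /Rf /hh /Tt /Cc /eF /poch.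
  rewrite !big_ord_recr !big_ord0 /=.
  by rewrite mul0r add0r (_ : 1`! = 1%N) //.
have E : Ysum n = \sum_(0 <= k < n.+3) Ak n k.
  by rewrite /Ysum [in RHS]big_nat_recr //= /Ak /Gk Tt_zero // mulr0 mul0r addr0.
have : Ysum n.+1 - sigF n%:R * Ysum n = 0.
  rewrite E /Ysum mulr_sumr -sumrB.
  rewrite (eq_big_nat _ _ (F2 := fun k => Wk n k.+1 - Wk n k)); last first.
    by move=> k /andP [_ hk]; apply: Z2; lia.
  rewrite (telescope_sumr (Wk n) (leq0n n.+3)) Wk0 /Wk (@Tt_zero n.+2 n.+3 (ltnSn _)).
  by rewrite mulr0 subrr.
rewrite IH => /eqP; rewrite subr_eq0 => /eqP ->.
rewrite (Crec n.+1) /sigF /eF (nS n).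
have hx : (0 : rat) <= n%:R by rewrite ler0n.
field. nz.
Qed.

Lemma AltS2 n : Alt (2 * n.+1) = Alt (2 * n) - 1/((2*n%:R+1)^+2) + 1/((2*n%:R+1+1)^+2).
Proof.
have -> : (2 * n.+1 = (2 * n).+2)%N by lia.
rewrite {1}/Alt big_nat_recr // big_nat_recr //= -/(Alt (2 * n)).
rewrite !exprS exprM sqrrN !expr1n (nS (2 * n).+1) (nS (2 * n)) natrM.
rewrite mulr1 mulrN1 !mulN1r; ring.
Qed.

Lemma mainL n : Lsum n = Cc n * Alt (2 * n).
Proof.
elim: n => [|n IH].
  by rewrite /Lsum /Alt big_nat1 HH0 big_geq // !mulr0.
rewrite lev1 IH lev2 (Crec n) AltS2 /eF.
have hx : (0 : rat) <= n%:R by rewrite ler0n.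
field. nz.
Qed.

Theorem mainTheorem9 (n : nat) (hn : (0 < n)%N) :
  \sum_(1 <= k < n.+1)
    ((8 * k%:R - 1) *
     (poch 1 k * poch (-(1/4)) k * poch (-(3/4)) k
        / (poch (1/2) k ^+ 2 * poch (3/2) k)) *
     (poch (1/2 + n%:R) k * poch (- n%:R) k
        / (poch (1/2 + 3 * n%:R) k * poch (-1 - 3 * n%:R) k)) *
     \sum_(1 <= i < k.+1) (1 / ((2 * i%:R - 1) ^+ 2) - 9 / (4 * i%:R ^+ 2)))
  = ((n`!)%:R ^+ 2 * poch (1/6) n * poch (5/6) n
       / (poch (1/2) n ^+ 2 * poch (2/3) n * poch (4/3) n)) *
    \sum_(1 <= j < (2 * n).+1) ((-1) ^+ j / (j%:R ^+ 2)) :> rat.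
Proof.
have := mainL n.
rewrite /Lsum big_ltn // HH0 mulr0 add0r.
by [].
Qed.
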